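(* Let $S = s_1,\ldots,s_n$ be a sequence of nonnegative integers, let $0<\alpha<1$, $\gamma>0$, let $k$ be a positive integer, and let $\epsilon>0$. Suppose $(L^*,\beta^* )$ is an optimal solution of $\textsc{Geo}(\alpha)$ for $S,\alpha,\gamma,k$, and let $(L,\beta)$ be the output of $\textit{GeoAlpha}(S,\alpha,\gamma,k,\epsilon)$. Then \[ \mathrm{score}_{\mathrm{geo}}(L,S;\alpha,\beta,\gamma) \le (1+\epsilon)\,\mathrm{score}_{\mathrm{geo}}(L^*,S;\alpha,\beta^*,\gamma). \]
   Context: A level sequence is $L = \ell_1,\ldots,\ell_n$ of integers with $0\le\ell_i\le k$; set $\ell_0=0$. The penalty is $\mathrm{pen}(x,y)=\max(y-x,0)\,\gamma\log n$. The geometric distribution is $p_{\mathrm{geo}}(s;\lambda) = (1-\lambda)\lambda^s$. For $0<\beta<1$ the score is $\mathrm{score}_{\mathrm{geo}}(L,S;\alpha,\beta,\gamma) = \sum_{i=1}^n\big[-\log p_{\mathrm{geo}}(s_i;\beta\alpha^{\ell_i}) + \mathrm{pen}(\ell_{i-1},\ell_i)\big]$. Problem $\textsc{Geo}(\alpha)$: given $S,\alpha,\gamma,k$, find a level sequence $L$ and $\beta\in(0,1)$ minimizing this score. $\textit{Viterbi}(S,\alpha,\beta,\gamma,k,p_{\mathrm{geo}})$ returns a level sequence minimizing $\mathrm{score}_{\mathrm{geo}}(\cdot,S;\alpha,\beta,\gamma)$ for the fixed $\alpha,\beta$. Algorithm $\textit{GeoAlpha}(S,\alpha,\gamma,k,\epsilon)$: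 let $\mu=\frac1n\sum_i s_i$. If $\mu=0$, return the all-zero level sequence. Otherwise let $\eta=\mu/(\mu+1)$ and $c=1$; while $\eta^c \le \mu/(\mu+1/n)$: set $\beta=\eta^c$, compute $L=\textit{Viterbi}(S,\alpha,\beta,\gamma,k,p_{\mathrm{geo}})$, and set $c \leftarrow c/(1+\epsilon)$. Return the pair $(L,\beta)$ with the smallest score $\mathrm{score}_{\mathrm{geo}}(L,S;\alpha,\beta,\gamma)$ among the tested ones. *)

(* Defs.v *)
From Stdlib Require Import Reals List.
Import ListNotations.
Open Scope R_scope.

Definition sumR (n : nat) (f : nat -> R) : R :=
  fold_right Rplus 0 (map f (seq 0 n)).

Definition len (S : list nat) : nat := length S.

Definition level_seq (k : nat) (S : list nat) (L : list nat) : Prop :=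
  length L = length S /\ Forall (fun l => (l <= k)%nat) L.

Definition p_geo (s : nat) (lam : R) : R := (1 - lam) * lam ^ s.

Definition pen (gamma : R) (n : nat) (x y : nat) : R :=
  Rmax (INR y - INR x) 0 * gamma * ln (INR n).

(* 0-indexed: level l_{i+1} = nth i L 0; previous level l_i (with l_0 = 0). *)
Definition prev_level (L : list nat) (i : nat) : nat :=
  match i with O => O | Datatypes.S j => nth j L O end.

Definition score_geo (L S : list nat) (alpha beta gamma : R) : R :=
  sumR (length S) (fun i =>
    - ln (p_geo (nth i S O) (beta * alpha ^ (nth i L O)))
    + pen gamma (length S) (prev_level L i) (nth i L O)).

Definition geo_optimal (S : list nat) (alpha gamma : R) (k : nat)
    (Lopt : list nat) (bopt : R) : Prop :=
  level_seq k S Lopt /\ 0 < bopt < 1 /\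
  forall L b, level_seq k S L -> 0 < b < 1 ->
    score_geo Lopt S alpha bopt gamma <= score_geo L S alpha b gamma.

Definition viterbi_spec (S : list nat) (alpha gamma : R) (k : nat)
    (vit : R -> list nat) : Prop :=
  forall b, 0 < b < 1 ->
    level_seq k S (vit b) /\
    forall L, level_seq k S L ->
      score_geo (vit b) S alpha b gamma <= score_geo L S alpha b gamma.

Definition mu (S : list nat) : R :=
  sumR (length S) (fun i => INR (nth i S O)) / INR (length S).

Definition eta (S : list nat) : R := mu S / (mu S + 1).

Definition c_iter (eps : R) (j : nat) : R := / (1 + eps) ^ j.

Definition beta_iter (S : list nat) (eps : R) (j : nat) : R :=
  Rpower (eta S) (c_iter eps j).

Definition loop_cond (S : list nat) (eps : R) (j : nat) : Prop :=
  beta_iter S eps j <= mu S / (mu S + / INR (length S)).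

(* iteration j is executed iff the while-condition held at iterations 0..j *)
Definition tested (S : list nat) (eps : R) (j : nat) : Prop :=
  forall i, (i <= j)%nat -> loop_cond S eps i.

(* (L, beta) is an output of GeoAlpha(S, alpha, gamma, k, eps) run with the
   Viterbi procedure vit (ties broken arbitrarily). *)
Definition geoalpha_output (S : list nat) (alpha gamma : R) (k : nat) (eps : R)
    (vit : R -> list nat) (L : list nat) (beta : R) : Prop :=
  (mu S = 0 /\ L = repeat O (length S)) \/
  (mu S <> 0 /\
   exists j, tested S eps j /\ beta = beta_iter S eps j /\ L = vit beta /\
     forall i, tested S eps i ->
       score_geo L S alpha beta gamma <=
       score_geo (vit (beta_iter S eps i)) S alpha (beta_iter S eps i) gamma).

(* Main.v *)
Require Import Defs.
From Stdlib Require Import Reals List.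
From Stdlib Require Import Lra Lia ZArith.
Open Scope R_scope.

Lemma ln_le' x y : 0 < x -> x <= y -> ln x <= ln y.
Proof.
  intros Hx Hxy. destruct (Rle_lt_or_eq_dec _ _ Hxy) as [H|H].
  - left; apply ln_increasing; lra.
  - subst; lra.
Qed.

Lemma exp_le' x y : x <= y -> exp x <= exp y.
Proof.
  intros Hxy. destruct (Rle_lt_or_eq_dec _ _ Hxy) as [H|H].
  - left; apply exp_increasing; lra.
  - subst; lra.
Qed.

Lemma ln_le_minus1 y : 0 < y -> ln y <= y - 1.
Proof. intros Hy. pose proof (exp_ineq1_le (ln y)) as H. rewrite exp_ln in H; lra. Qed.

Lemma pow_le_one x n : 0 <= x <= 1 -> x ^ n <= 1.
Proof.
  intros Hx. induction n as [|n IH]; simpl; [lra|].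
  assert (0 <= x ^ n) by (apply pow_le; lra). nra.
Qed.

Lemma fold_plus_shift l a : fold_right Rplus a l = fold_right Rplus 0 l + a.
Proof. induction l as [|x l IH]; simpl; [lra| rewrite IH; lra]. Qed.

Lemma sumR_S n f : sumR (S n) f = sumR n f + f n.
Proof.
  unfold sumR. rewrite seq_S, map_app, fold_right_app. simpl.
  rewrite fold_plus_shift. lra.
Qed.

Lemma sumR_le n f g : (forall i, (i < n)%nat -> f i <= g i) -> sumR n f <= sumR n g.
Proof.
  induction n as [|n IH]; intros H.
  - unfold sumR; simpl; lra.
  - rewrite !sumR_S. apply Rplus_le_compat; [apply IH; intros; apply H; lia| apply H; lia].
Qed.

Lemma sumR_lt n f g : (0 < n)%nat -> (forall i, (i < n)%nat -> f i < g i) -> sumR n f < sumR n g.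
Proof.
  intros Hn H. destruct n as [|n]; [lia|].
  rewrite !sumR_S. apply Rplus_le_lt_compat; [apply sumR_le; intros; left; apply H; lia| apply H; lia].
Qed.

Lemma sumR_plus n f g : sumR n (fun i => f i + g i) = sumR n f + sumR n g.
Proof. induction n as [|n IH]; [unfold sumR; simpl; lra| rewrite !sumR_S, IH; lra]. Qed.

Lemma sumR_scal n c f : sumR n (fun i => c * f i) = c * sumR n f.
Proof. induction n as [|n IH]; [unfold sumR; simpl; lra| rewrite !sumR_S, IH; lra]. Qed.

Lemma sumR_const n c : sumR n (fun _ => c) = INR n * c.
Proof. induction n as [|n IH]; [unfold sumR; simpl; lra| rewrite !sumR_S, IH, S_INR; lra]. Qed.

Lemma sumR_nonneg n f : (forall i, (i < n)%nat -> 0 <= f i) -> 0 <= sumR n f.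
Proof.
  induction n as [|n IH]; intros H; [unfold sumR; simpl; lra|].
  rewrite sumR_S. assert (0 <= f n) by (apply H; lia).
  assert (0 <= sumR n f) by (apply IH; intros; apply H; lia). lra.
Qed.

Lemma sumR_term n f i : (forall j, (j < n)%nat -> 0 <= f j) -> (i < n)%nat -> f i <= sumR n f.
Proof.
  induction n as [|n IH]; intros H Hi; [lia|].
  rewrite sumR_S. destruct (Nat.eq_dec i n) as [->|Hne].
  - assert (0 <= sumR n f) by (apply sumR_nonneg; intros; apply H; lia). lra.
  - assert (f i <= sumR n f) by (apply IH; [intros; apply H; lia| lia]).
    assert (0 <= f n) by (apply H; lia). lra.
Qed.

Lemma sumR_ind n i0 X :
  sumR n (fun i => if Nat.eq_dec i i0 then X else 0) = if lt_dec i0 n then X else 0.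
Proof.
  induction n as [|n IH]; [unfold sumR; simpl; destruct (lt_dec i0 0); [lia|lra]|].
  rewrite sumR_S, IH.
  destruct (Nat.eq_dec n i0); destruct (lt_dec i0 n); destruct (lt_dec i0 (S n)); try lia; lra.
Qed.

Lemma termeq s lam : 0 < lam < 1 -> - ln (p_geo s lam) = - ln (1 - lam) - INR s * ln lam.
Proof.
  intros H. unfold p_geo. rewrite ln_mult, ln_pow; try lra.
  apply pow_lt; lra.
Qed.

Lemma lnN_nonneg N : (1 <= N)%nat -> 0 <= ln (INR N).
Proof.
  intros H. rewrite <- ln_1. apply ln_le'; [lra|].
  change 1 with (INR 1). apply le_INR; lia.
Qed.

Lemma pen_nonneg g N x y : 0 < g -> (1 <= N)%nat -> 0 <= pen g N x y.
Proof.
  intros Hg HN. unfold pen. pose proof (lnN_nonneg N HN).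
  assert (0 <= Rmax (INR y - INR x) 0) by apply Rmax_r.
  apply Rmult_le_pos; [|lra]. apply Rmult_le_pos; lra.
Qed.

Lemma pen_mono g N u v : 0 < g -> (1 <= N)%nat -> u <= v ->
  Rmax u 0 * g * ln (INR N) <= Rmax v 0 * g * ln (INR N).
Proof.
  intros Hg HN Huv. pose proof (lnN_nonneg N HN).
  apply Rmult_le_compat_r; [lra|]. apply Rmult_le_compat_r; [lra|].
  unfold Rmax. destruct (Rle_dec u 0); destruct (Rle_dec v 0); lra.
Qed.

Lemma gibbs A B x : 0 < A -> 0 < B -> 0 < x < 1 ->
  A * (ln x - ln (A / (A + B))) + B * (ln (1 - x) - ln (1 - A / (A + B))) <= 0.
Proof.
  intros HA HB Hx. set (p := A / (A + B)).
  assert (Hp : 0 < p < 1). { unfold p. split. apply Rdiv_lt_0_compat; lra.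
    apply (Rmult_lt_reg_r (A + B)); [lra|]. unfold Rdiv. rewrite Rmult_assoc, Rinv_l; lra. }
  assert (E1 : ln x - ln p = ln (x / p)).
  { replace x with (p * (x / p)) at 1 by (field; lra). rewrite ln_mult; [lra|lra|].
    apply Rdiv_lt_0_compat; lra. }
  assert (E2 : ln (1 - x) - ln (1 - p) = ln ((1 - x) / (1 - p))).
  { replace (1 - x) with ((1 - p) * ((1 - x) / (1 - p))) at 1 by (field; lra). rewrite ln_mult; [lra|lra|].
    apply Rdiv_lt_0_compat; lra. }
  rewrite E1, E2.
  assert (F1 : ln (x / p) <= x / p - 1) by (apply ln_le_minus1; apply Rdiv_lt_0_compat; lra).
  assert (F2 : ln ((1 - x) / (1 - p)) <= (1 - x) / (1 - p) - 1)
    by (apply ln_le_minus1; apply Rdiv_lt_0_compat; lra).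
  assert (Ex : x / p = x * (A + B) / A) by (unfold p; field; lra).
  assert (Ey : (1 - x) / (1 - p) = (1 - x) * (A + B) / B).
  { unfold p. field. split; [lra|]. intro Hc.
    assert (A / (A + B) = 1) by lra. unfold p in Hp. lra. }
  assert (A * (x / p - 1) + B * ((1 - x) / (1 - p) - 1) = 0).
  { rewrite Ex, Ey. field. lra. }
  assert (A * ln (x / p) <= A * (x / p - 1)) by (apply Rmult_le_compat_l; lra).
  assert (B * ln ((1 - x) / (1 - p)) <= B * ((1 - x) / (1 - p) - 1)) by (apply Rmult_le_compat_l; lra).
  lra.
Qed.

Definition SS (S : list nat) : R := sumR (length S) (fun i => INR (nth i S 0%nat)).

Lemma alpha_pow_facts alpha l : 0 < alpha < 1 -> 0 < alpha ^ l <= 1 /\ ln (alpha ^ l) <= 0.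
Proof.
  intros Ha. split; [split; [apply pow_lt; lra| apply pow_le_one; lra]|].
  rewrite ln_pow by lra. assert (ln alpha < 0) by (rewrite <- ln_1; apply ln_increasing; lra).
  pose proof (pos_INR l). nra.
Qed.

Lemma lower_clamp S alpha gamma L b :
  0 < alpha < 1 -> 0 < gamma -> (1 <= length S)%nat -> 0 < SS S ->
  0 < b <= SS S / (SS S + INR (length S)) ->
  score_geo L S alpha (SS S / (SS S + INR (length S))) gamma <= score_geo L S alpha b gamma.
Proof.
  intros Ha Hg Hn HS Hb. set (eta0 := SS S / (SS S + INR (length S))) in *.
  assert (HN : 0 < INR (length S)) by (apply lt_0_INR; lia).
  assert (Heta : 0 < eta0 < 1).
  { unfold eta0. split. apply Rdiv_lt_0_compat; lra.
    apply (Rmult_lt_reg_r (SS S + INR (length S))); [lra|]. unfold Rdiv. rewrite Rmult_assoc, Rinv_l; lra. }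
  set (K := ln (1 - b) - ln (1 - eta0)). set (D := ln eta0 - ln b).
  unfold score_geo.
  apply Rle_trans with (sumR (length S) (fun i =>
     (- ln (p_geo (nth i S 0%nat) (b * alpha ^ nth i L 0%nat)) +
      pen gamma (length S) (prev_level L i) (nth i L 0%nat) + K) + (- D) * INR (nth i S 0%nat))).
  - apply sumR_le. intros i Hi.
    destruct (alpha_pow_facts alpha (nth i L 0%nat) Ha) as [Ha1 Ha2].
    set (a := alpha ^ nth i L 0%nat) in *. set (s := nth i S 0%nat).
    rewrite !termeq by (split; nra).
    rewrite !ln_mult by lra.
    assert (ln (1 - b * a) - ln (1 - eta0 * a) <= K).
    { unfold K. assert (ln ((1 - b * a) * (1 - eta0)) <= ln ((1 - b) * (1 - eta0 * a))).
      { apply ln_le'; [apply Rmult_lt_0_compat; nra| nra]. }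
      rewrite !ln_mult in H by nra. lra. }
    unfold D. lra.
  - rewrite sumR_plus, sumR_plus, sumR_const, sumR_scal.
    pose proof (gibbs (SS S) (INR (length S)) b HS HN ltac:(lra)) as G.
    fold eta0 in G. unfold SS in G. unfold K, D. nra.
Qed.

Lemma upper_clamp S alpha gamma L b i0 :
  0 < alpha < 1 -> 0 < gamma -> (1 <= length S)%nat -> 0 < SS S ->
  (i0 < length S)%nat -> nth i0 L 0%nat = 0%nat ->
  SS S / (SS S + 1) <= b < 1 ->
  score_geo L S alpha (SS S / (SS S + 1)) gamma <= score_geo L S alpha b gamma.
Proof.
  intros Ha Hg Hn HS Hi0 HL0 Hb. set (b1 := SS S / (SS S + 1)) in *.
  assert (Hb1 : 0 < b1 < 1).
  { unfold b1. split. apply Rdiv_lt_0_compat; lra.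
    apply (Rmult_lt_reg_r (SS S + 1)); [lra|]. unfold Rdiv. rewrite Rmult_assoc, Rinv_l; lra. }
  set (K := ln (1 - b) - ln (1 - b1)). set (D := ln b1 - ln b).
  unfold score_geo.
  apply Rle_trans with (sumR (length S) (fun i =>
     (- ln (p_geo (nth i S 0%nat) (b * alpha ^ nth i L 0%nat)) +
      pen gamma (length S) (prev_level L i) (nth i L 0%nat) + (if Nat.eq_dec i i0 then K else 0))
      + (- D) * INR (nth i S 0%nat))).
  - apply sumR_le. intros i Hi.
    destruct (alpha_pow_facts alpha (nth i L 0%nat) Ha) as [Ha1 Ha2].
    set (a := alpha ^ nth i L 0%nat) in *. set (s := nth i S 0%nat).
    rewrite !termeq by (split; nra).
    rewrite !ln_mult by lra.
    destruct (Nat.eq_dec i i0) as [->|Hne].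
    + assert (a = 1) by (unfold a; rewrite HL0; simpl; lra).
      rewrite H, !Rmult_1_r. unfold K, D. lra.
    + assert (ln (1 - b * a) <= ln (1 - b1 * a)) by (apply ln_le'; nra).
      unfold D. lra.
  - rewrite sumR_plus, sumR_plus, sumR_ind, sumR_scal.
    destruct (lt_dec i0 (length S)); [|lia].
    assert (HB : 0 < 1) by lra.
    pose proof (gibbs (SS S) 1 b HS HB ltac:(lra)) as G.
    fold b1 in G. unfold SS in G. unfold K, D. nra.
Qed.

Lemma scaling S alpha gamma L eta0 eps c t :
  0 < alpha < 1 -> 0 < gamma -> (1 <= length S)%nat -> 0 < eta0 < 1 -> 0 < eps ->
  0 < t <= c -> c <= (1 + eps) * t ->
  score_geo L S alpha (Rpower eta0 c) gamma <= (1 + eps) * score_geo L S alpha (Rpower eta0 t) gamma.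
Proof.
  intros Ha Hg Hn He Heps Ht Hc.
  unfold score_geo. rewrite <- sumR_scal. apply sumR_le. intros i Hi.
  unfold Rpower.
  assert (Hl : ln eta0 < 0) by (rewrite <- ln_1; apply ln_increasing; lra).
  assert (Hbc : 0 < exp (c * ln eta0) < 1).
  { split; [apply exp_pos|]. rewrite <- exp_0. apply exp_increasing. nra. }
  assert (Hbt : 0 < exp (t * ln eta0) < 1).
  { split; [apply exp_pos|]. rewrite <- exp_0. apply exp_increasing. nra. }
  assert (Hct : exp (c * ln eta0) <= exp (t * ln eta0)) by (apply exp_le'; nra).
  destruct (alpha_pow_facts alpha (nth i L 0%nat) Ha) as [Ha1 Ha2].
  set (a := alpha ^ nth i L 0%nat) in *. set (s := nth i S 0%nat).
  set (bc := exp (c * ln eta0)) in *. set (bt := exp (t * ln eta0)) in *.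
  rewrite !termeq by (split; nra).
  rewrite !ln_mult by lra.
  unfold bc, bt. rewrite !ln_exp. fold bc bt.
  pose proof (pen_nonneg gamma (length S) (prev_level L i) (nth i L 0%nat) Hg Hn) as HP.
  set (P := pen gamma (length S) (prev_level L i) (nth i L 0%nat)) in *.
  assert (X1 : - ln (1 - bc * a) <= - ln (1 - bt * a)).
  { assert (ln (1 - bt * a) <= ln (1 - bc * a)) by (apply ln_le'; nra). lra. }
  assert (X2 : 0 <= - ln (1 - bt * a)).
  { assert (ln (1 - bt * a) <= ln 1) by (apply ln_le'; nra). rewrite ln_1 in H. lra. }
  assert (Hs : 0 <= INR s) by apply pos_INR.
  assert (Y1 : c * ln eta0 >= (1 + eps) * t * ln eta0) by nra.
  assert (Y2 : INR s * (c * ln eta0) >= INR s * ((1 + eps) * t * ln eta0)) by nra.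
  assert (Y0 : 0 <= INR s * (- ln a)) by (apply Rmult_le_pos; lra).
  assert (Y3 : 0 <= eps * (- (INR s * ln a))) by (apply Rmult_le_pos; lra).
  assert (Y4 : 0 <= eps * (- ln (1 - bt * a))) by (apply Rmult_le_pos; lra).
  assert (Y5 : 0 <= eps * P) by (apply Rmult_le_pos; lra).
  assert (E : (1 + eps) * (- ln (1 - bt * a) - INR s * (t * ln eta0 + ln a) + P) =
     - ln (1 - bt * a) + eps * (- ln (1 - bt * a)) - INR s * ((1 + eps) * t * ln eta0)
     - INR s * ln a + eps * (- (INR s * ln a)) + P + eps * P) by ring.
  rewrite E.
  assert (E2 : INR s * (c * ln eta0 + ln a) = INR s * (c * ln eta0) + INR s * ln a) by ring.
  rewrite E2. lra.
Qed.

Lemma bernoulli e N : 0 <= e -> 1 + INR N * e <= (1 + e) ^ N.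
Proof.
  intros He. induction N as [|N IH]; [simpl; lra|].
  rewrite S_INR. simpl. assert (0 <= INR N) by apply pos_INR. nra.
Qed.

Lemma arch_nat x : exists N : nat, x < INR N.
Proof.
  destruct (archimed x) as [H1 _].
  destruct (Z_le_gt_dec 0 (up x)) as [Hz|Hz].
  - exists (Z.to_nat (up x)). rewrite INR_IZR_INZ, Z2Nat.id by lia. lra.
  - exists 0%nat. simpl. assert (IZR (up x) < 0) by (apply IZR_lt; lia). lra.
Qed.

Lemma c_iter_pos eps j : 0 < eps -> 0 < c_iter eps j.
Proof. intros. unfold c_iter. apply Rinv_0_lt_compat, pow_lt. lra. Qed.

Lemma c_iter_mono eps i j : 0 < eps -> (i <= j)%nat -> c_iter eps j <= c_iter eps i.
Proof.
  intros He Hij. unfold c_iter. apply Rinv_le_contravar; [apply pow_lt; lra|].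
  apply Rle_pow; [lra|lia].
Qed.

Lemma c_iter_S eps j : 0 < eps -> c_iter eps (S j) * (1 + eps) = c_iter eps j.
Proof.
  intros He. unfold c_iter. simpl. field. split; [|lra]. apply pow_nonzero. lra.
Qed.

Lemma find_j eps t : 0 < eps -> 0 < t <= 1 ->
  exists j, t <= c_iter eps j /\ c_iter eps j <= (1 + eps) * t.
Proof.
  intros He Ht.
  assert (HN : exists N, c_iter eps N < t).
  { destruct (arch_nat (/ (t * eps))) as [N HN]. exists N.
    unfold c_iter. pose proof (bernoulli eps N ltac:(lra)).
    assert (Hp : 0 < (1 + eps) ^ N) by (apply pow_lt; lra).
    assert (INR N * (t * eps) > 1).
    { apply (Rmult_lt_reg_r (/ (t * eps))). apply Rinv_0_lt_compat; nra.
      rewrite Rmult_assoc, Rinv_r by nra. lra. }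
    apply (Rmult_lt_reg_r ((1 + eps) ^ N)); [lra|]. rewrite Rinv_l by lra. nra. }
  destruct HN as [N HN].
  assert (forall N, c_iter eps N < t -> exists j, t <= c_iter eps j /\ c_iter eps (S j) < t).
  { clear HN N. induction N as [|N IH]; intros H.
    - unfold c_iter in H. simpl in H. rewrite Rinv_1 in H. lra.
    - destruct (Rlt_le_dec (c_iter eps N) t) as [H'|H'].
      + apply IH; auto.
      + exists N; auto. }
  destruct (H N HN) as [j [Hj1 Hj2]]. exists j. split; auto.
  rewrite <- (c_iter_S eps j He). nra.
Qed.

Lemma list_min (l : list nat) : l <> nil -> exists m, In m l /\ forall x, In x l -> (m <= x)%nat.
Proof.
  induction l as [|a l IH]; intros H; [congruence|].
  destruct l as [|b l'].
  - exists a. split; [left; reflexivity|]. intros x [Hx|[]]; lia.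
  - destruct IH as [m [Hm Hmin]]; [discriminate|].
    destruct (Nat.le_gt_cases a m).
    + exists a. split; [left; auto|]. intros x [Hx|Hx]; [lia| specialize (Hmin x Hx); lia].
    + exists m. split; [right; auto|]. intros x [Hx|Hx]; [lia| auto].
Qed.

Lemma nth_shift (L : list nat) m i : nth i (map (fun l => (l - m)%nat) L) 0%nat = (nth i L 0%nat - m)%nat.
Proof. pose proof (map_nth (fun l => (l - m)%nat) L 0%nat i) as H. simpl in H. exact H. Qed.

Lemma shift_le S alpha gamma Lopt bopt m :
  0 < alpha < 1 -> 0 < gamma -> 0 < bopt < 1 -> length Lopt = length S ->
  (forall x, In x Lopt -> (m <= x)%nat) -> (1 <= length S)%nat ->
  score_geo (map (fun l => (l - m)%nat) Lopt) S alpha (bopt * alpha ^ m) gamma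
  <= score_geo Lopt S alpha bopt gamma.
Proof.
  intros Ha Hg Hb HlL Hmin Hn. unfold score_geo. apply sumR_le. intros i Hi.
  assert (Hmi : (m <= nth i Lopt 0%nat)%nat) by (apply Hmin; apply nth_In; lia).
  rewrite nth_shift.
  replace (bopt * alpha ^ m * alpha ^ (nth i Lopt 0%nat - m))
    with (bopt * alpha ^ (nth i Lopt 0%nat)).
  2:{ rewrite Rmult_assoc, <- pow_add. f_equal. f_equal. lia. }
  apply Rplus_le_compat_l. unfold pen. apply pen_mono; auto.
  destruct i as [|j]; simpl prev_level.
  - rewrite minus_INR by lia. simpl. pose proof (pos_INR m). lra.
  - rewrite nth_shift.
    assert (Hmj : (m <= nth j Lopt 0%nat)%nat) by (apply Hmin; apply nth_In; lia).
    rewrite !minus_INR by lia. lra.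
Qed.

Theorem proposition2 (S : list nat) (alpha gamma : R) (k : nat) (eps : R)
    (Lopt : list nat) (bopt : R) (vit : R -> list nat) (L : list nat) (beta : R) :
  0 < alpha < 1 -> 0 < gamma -> (1 <= k)%nat -> 0 < eps ->
  geo_optimal S alpha gamma k Lopt bopt ->
  viterbi_spec S alpha gamma k vit ->
  geoalpha_output S alpha gamma k eps vit L beta ->
  score_geo L S alpha beta gamma <= (1 + eps) * score_geo Lopt S alpha bopt gamma.
Proof.
  intros Ha Hg Hk He Hopt Hvit Hout.
  destruct Hopt as [HLopt [Hb Hoptm]].
  destruct (Nat.eq_dec (length S) 0) as [Hn0|Hn].
  { unfold score_geo. rewrite Hn0. unfold sumR. simpl. lra. }
  assert (Hn1 : (1 <= length S)%nat) by lia.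
  assert (HN : 0 < INR (length S)) by (apply lt_0_INR; lia).
  assert (HS0 : 0 <= SS S) by (unfold SS; apply sumR_nonneg; intros; apply pos_INR).
  assert (Hmu : mu S = SS S / INR (length S)) by reflexivity.
  destruct (Req_dec (SS S) 0) as [HSz|HSz].
  { (* all s_i are zero: no optimum exists *)
    exfalso.
    assert (Hz : forall i, (i < length S)%nat -> nth i S 0%nat = 0%nat).
    { intros i Hi. assert (INR (nth i S 0%nat) <= SS S).
      { unfold SS. apply (sumR_term (length S) (fun i => INR (nth i S 0%nat))); auto.
        intros; apply pos_INR. }
      pose proof (pos_INR (nth i S 0%nat)).
      apply INR_eq. simpl. lra. }
    assert (Hlt : score_geo Lopt S alpha (bopt / 2) gamma < score_geo Lopt S alpha bopt gamma).
    { unfold score_geo. apply sumR_lt; [lia|]. intros i Hi.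
      destruct (alpha_pow_facts alpha (nth i Lopt 0%nat) Ha) as [Ha1 Ha2].
      rewrite !termeq by (split; nra). rewrite (Hz i Hi). simpl INR.
      apply Rplus_lt_compat_r.
      assert (ln (1 - bopt * alpha ^ nth i Lopt 0%nat) < ln (1 - bopt / 2 * alpha ^ nth i Lopt 0%nat))
        by (apply ln_increasing; nra).
      lra. }
    pose proof (Hoptm Lopt (bopt / 2) HLopt ltac:(lra)). lra. }
  assert (HS : 0 < SS S) by lra.
  destruct Hout as [[Hmu0 _]|[_ [j0 [Htj0 [Hbeta [HL Hmin]]]]]].
  { rewrite Hmu in Hmu0. assert (0 < SS S / INR (length S)) by (apply Rdiv_lt_0_compat; lra). lra. }
  destruct HLopt as [HlenL HForL].
  destruct (list_min Lopt) as [m [Hm Hmmin]].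
  { intro Hc. rewrite Hc in HlenL. simpl in HlenL. lia. }
  destruct (In_nth Lopt m 0%nat Hm) as [i0 [Hi0 Hi0m]].
  set (L' := map (fun l => (l - m)%nat) Lopt).
  set (b' := bopt * alpha ^ m).
  assert (HL' : level_seq k S L').
  { split. unfold L'. rewrite length_map. auto.
    unfold L'. apply Forall_map. eapply Forall_impl; [|exact HForL]. simpl. intros; lia. }
  assert (Hb' : 0 < b' < 1).
  { destruct (alpha_pow_facts alpha m Ha) as [Ha1 _]. unfold b'. split; nra. }
  assert (HL'0 : nth i0 L' 0%nat = 0%nat) by (unfold L'; rewrite nth_shift; lia).
  assert (Hsh : score_geo L' S alpha b' gamma <= score_geo Lopt S alpha bopt gamma)
    by (apply shift_le; auto).
  set (eta0 := SS S / (SS S + INR (length S))).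
  set (b1 := SS S / (SS S + 1)).
  assert (Heta : eta S = eta0).
  { unfold eta, eta0. rewrite Hmu. field. split; lra. }
  assert (Hbnd : mu S / (mu S + / INR (length S)) = b1).
  { unfold b1. rewrite Hmu. field. split; lra. }
  assert (Heta0 : 0 < eta0) by (apply Rdiv_lt_0_compat; lra).
  assert (Hb1 : b1 < 1).
  { unfold b1. apply (Rmult_lt_reg_r (SS S + 1)); [lra|]. unfold Rdiv. rewrite Rmult_assoc, Rinv_l; lra. }
  assert (Heb : eta0 <= b1).
  { unfold eta0, b1. unfold Rdiv. apply Rmult_le_compat_l; [lra|].
    assert (1 <= INR (length S)) by (change 1 with (INR 1); apply le_INR; lia).
    apply Rinv_le_contravar; lra. }
  assert (Hcl : exists b2, eta0 <= b2 <= b1 /\ score_geo L' S alpha b2 gamma <= score_geo L' S alpha b' gamma).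
  { destruct (Rle_dec b' eta0) as [H1|H1].
    - exists eta0. split; [lra|]. apply lower_clamp; auto. unfold eta0 in *; lra.
    - destruct (Rle_dec b1 b') as [H2|H2].
      + exists b1. split; [lra|]. apply (upper_clamp S alpha gamma L' b' i0); auto; try lia; unfold b1 in *; lra.
      + exists b'. split; [lra|lra]. }
  destruct Hcl as [b2 [Hb2 Hsc2]].
  assert (Hleta : ln eta0 < 0) by (rewrite <- ln_1; apply ln_increasing; lra).
  set (t := ln b2 / ln eta0).
  assert (Hlb2 : ln b2 < 0) by (rewrite <- ln_1; apply ln_increasing; lra).
  assert (Hlb2' : ln eta0 <= ln b2) by (apply ln_le'; lra).
  assert (Ht : 0 < t <= 1).
  { unfold t. split.
    - unfold Rdiv. apply Rmult_lt_reg_r with (- ln eta0); [lra|].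
      replace (ln b2 * / ln eta0 * - ln eta0) with (- ln b2) by (field; lra). lra.
    - apply Rmult_le_reg_r with (- ln eta0); [lra|].
      replace (ln b2 / ln eta0 * - ln eta0) with (- ln b2) by (field; lra). lra. }
  assert (Hpt : Rpower eta0 t = b2).
  { unfold Rpower, t. replace (ln b2 / ln eta0 * ln eta0) with (ln b2) by (field; lra).
    apply exp_ln; lra. }
  destruct (find_j eps t He Ht) as [j [Hj1 Hj2]].
  assert (Htj : tested S eps j).
  { intros i Hij. unfold loop_cond. rewrite Hbnd. unfold beta_iter. rewrite Heta.
    unfold Rpower. apply Rle_trans with b2; [|lra].
    rewrite <- Hpt. unfold Rpower. apply exp_le'.
    pose proof (c_iter_mono eps i j He Hij). nra. }
  assert (Hbj : 0 < beta_iter S eps j < 1).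
  { unfold beta_iter. rewrite Heta. unfold Rpower. split; [apply exp_pos|].
    rewrite <- exp_0. apply exp_increasing. pose proof (c_iter_pos eps j He). nra. }
  pose proof (Hmin j Htj) as C1.
  destruct (Hvit _ Hbj) as [_ Hv]. pose proof (Hv L' HL') as C2.
  assert (C3 : score_geo L' S alpha (beta_iter S eps j) gamma <= (1 + eps) * score_geo L' S alpha b2 gamma).
  { unfold beta_iter. rewrite Heta. rewrite <- Hpt.
    apply scaling; auto; [split; lra| lra]. }
  rewrite Hbeta in *. rewrite HL in *.
  assert ((1 + eps) * score_geo L' S alpha b2 gamma <= (1 + eps) * score_geo Lopt S alpha bopt gamma)
    by (apply Rmult_le_compat_l; lra).
  lra.
Qed.
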